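(* If $N$ is a probabilistic algorithmic knowledge structure in which agent $i$ uses a knowledge algorithm $\mathtt{A}_i$ that is $\phi$-complete and respects negation, then $N\models X_i\phi\Leftrightarrow\neg X_i\neg\phi$.
   Context: A derandomizer is $v=(v_1,\dots,v_n)$ with each $v_i$ a sequence of coin-toss outcomes; $V$ is the set of derandomizers. A probabilistic algorithmic knowledge structure is $N=(S,\pi,L_1,\dots,L_n,\mathtt{A}^d_1,\dots,\mathtt{A}^d_n,\nu)$ with states $S$, truth assignments $\pi(s)$ to primitive propositions, local-state functions $L_i$, deterministic functions $\mathtt{A}^d_i(\psi,\ell,s,v_i)\in\{$''Yes'',''No'',''?''$\}$ (derandomized version of agent $i$'s knowledge algorithm $\mathtt{A}_i$), and a probability distribution $\nu$ on $V$ such that each answer set $\{v:\mathtt{A}^d_i(\psi,L_i(s),s,v_i)=a\}$ is nonempty iff it has positive $\nu$-probability. $(N,s,v)\models X_i\psi$ iff $\mathtt{A}^d_i(\psi,L_i(s),s,v_i)=$''Yes''; $\neg$ and $\Leftrightarrow$ are interpreted as usual; $N\models\chi$ means $(N,s,v)\models\chi$ for all $s\in S$, $v\in V$. $\mathtt{A}_i$ is $\phi$-complete if $\mathtt{A}^d_i(\phi,L_i(s),s,v_i)\in\{$''Yes'',''No''$\}$ for all $s,v$. $\mathtt{A}_i$ weakly respects negation if for all $\psi,\ell,s,v$: $\mathtt{A}^d_i(\neg\psi,\ell,s,v_i)$ is ''Yes'' when $\mathtt{A}^d_i(\psi,\ell,s,v_i)=$''No'', ''No'' when it is ''Yes'',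 ''?'' when it is ''?''; it strongly respects negation if $\mathtt{A}^d_i(\neg\psi,\ell,s,v_i)$ is ''Yes'' when $\mathtt{A}^d_i(\psi,\ell,s,v_i)\ne$''Yes'' and ''No'' when it is ''Yes''; it respects negation if it weakly or strongly respects negation. *)

(* Defs.v *)
From Stdlib Require Import Reals.
From mathcomp Require Import ssreflect ssrfun ssrbool eqtype ssrnat fintype.
Set Implicit Arguments.
Unset Strict Implicit.

Inductive form (n : nat) (Phi : Type) : Type :=
  | Prim of Phi
  | Neg of form n Phi
  | And of form n Phi & form n Phi
  | X of 'I_n & form n Phi.
Arguments Prim {n Phi}. Arguments Neg {n Phi}. Arguments And {n Phi}.
Arguments X {n Phi}.

Definition Imp n Phi (f g : form n Phi) : form n Phi := Neg (And f (Neg g)).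
Definition Iff n Phi (f g : form n Phi) : form n Phi := And (Imp f g) (Imp g f).

Inductive answer : Type := Yes | No | Unknown.

Definition coins := nat -> bool.
Definition derand (n : nat) := 'I_n -> coins.

Record PAKS (n : nat) (Phi Loc : Type) := {
  St : Type;
  pi : St -> Phi -> bool;
  L : 'I_n -> St -> Loc;
  Ad : 'I_n -> form n Phi -> Loc -> St -> coins -> answer;
  nu : (derand n -> Prop) -> R;
  nu_ge0 : forall A, (0 <= nu A)%R;
  nu_total : nu (fun _ => True) = 1%R;
  nu_answers : forall i psi s a,
    (exists v : derand n, Ad i psi (L i s) s (v i) = a) <->
    (0 < nu (fun v => Ad i psi (L i s) s (v i) = a))%R
}.
Arguments St {n Phi Loc}.
Arguments pi {n Phi Loc} _ _ _.
Arguments L {n Phi Loc} _ _ _.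
Arguments Ad {n Phi Loc} _ _ _ _ _ _.
Arguments nu {n Phi Loc} _ _.

Unset Implicit Arguments.
Fixpoint sat n Phi Loc (N : PAKS n Phi Loc) (s : St N) (v : derand n)
    (f : form n Phi) : Prop :=
  match f with
  | Prim p => pi N s p = true
  | Neg g => ~ sat n Phi Loc N s v g
  | And g h => sat n Phi Loc N s v g /\ sat n Phi Loc N s v h
  | X i g => Ad N i g (L N i s) s (v i) = Yes
  end.

Arguments sat {n Phi Loc} N s v f.
Definition valid n Phi Loc (N : PAKS n Phi Loc) (f : form n Phi) : Prop :=
  forall (s : St N) (v : derand n), sat N s v f.

Definition complete n Phi Loc (N : PAKS n Phi Loc) (i : 'I_n) (phi : form n Phi) :=
  forall (s : St N) (v : derand n),
    Ad N i phi (L N i s) s (v i) = Yes \/ Ad N i phi (L N i s) s (v i) = No.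

Definition weakly_respects_negation n Phi Loc (N : PAKS n Phi Loc) (i : 'I_n) :=
  forall (psi : form n Phi) (l : Loc) (s : St N) (c : coins),
    (Ad N i psi l s c = No -> Ad N i (Neg psi) l s c = Yes) /\
    (Ad N i psi l s c = Yes -> Ad N i (Neg psi) l s c = No) /\
    (Ad N i psi l s c = Unknown -> Ad N i (Neg psi) l s c = Unknown).

Definition strongly_respects_negation n Phi Loc (N : PAKS n Phi Loc) (i : 'I_n) :=
  forall (psi : form n Phi) (l : Loc) (s : St N) (c : coins),
    (Ad N i psi l s c <> Yes -> Ad N i (Neg psi) l s c = Yes) /\
    (Ad N i psi l s c = Yes -> Ad N i (Neg psi) l s c = No).

Arguments valid {n Phi Loc} N f.
Arguments complete {n Phi Loc} N i phi.
Arguments weakly_respects_negation {n Phi Loc} N i.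
Arguments strongly_respects_negation {n Phi Loc} N i.
Definition respects_negation n Phi Loc (N : PAKS n Phi Loc) (i : 'I_n) :=
  weakly_respects_negation N i \/ strongly_respects_negation N i.
Arguments respects_negation {n Phi Loc} N i.

(* Main.v *)
Require Import Defs.
From Stdlib Require Import Reals.
From mathcomp Require Import ssreflect ssrfun ssrbool eqtype ssrnat fintype.

Theorem lemmaA2 (n : nat) (Phi Loc : Type) (N : PAKS n Phi Loc)
    (i : 'I_n) (phi : form n Phi) :
  complete N i phi -> respects_negation N i ->
  valid N (Iff (X i phi) (Neg (X i (Neg phi)))).
Proof.
  move=> Hc Hr s v /=.
  have H1 : Ad N i phi (L N i s) s (v i) = Yes -> Ad N i (Neg phi) (L N i s) s (v i) = No.
    case: Hr => H; case: (H phi (L N i s) s (v i)) => Ha Hb; first by case: Hb.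
    exact: Hb.
  have H2 : Ad N i phi (L N i s) s (v i) = No -> Ad N i (Neg phi) (L N i s) s (v i) = Yes.
    case: Hr => H; case: (H phi (L N i s) s (v i)) => [Ha Hb] Hn; first exact: Ha.
    by apply: Ha; rewrite Hn.
  case: (Hc s v) => E.
  - have := H1 E; move=> F; rewrite E F; split; move=> [A B]; apply: B; done.
  - have := H2 E; move=> F; rewrite E F; split; move=> [A B]; [by [] | by apply: A].
Qed.
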